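(* Let $m\ge 3$ be odd. There is no monic polynomial $g\in\mathbb{Z}[X]$ of degree $m$ such that $f(X)=g(X^2)$ is irreducible over $\mathbb{Q}$, monogenic, and has Galois group $\mathrm{Gal}(f/\mathbb{Q})$ isomorphic to the dihedral group $D_m$ of order $2m$ (acting regularly on the $2m$ roots of $f$).
   Context: A monic irreducible polynomial $f\in\mathbb{Z}[X]$ with a root $\alpha$ is called monogenic if $\mathbb{Z}[\alpha]$ equals the full ring of integers of $\mathbb{Q}(\alpha)$. $\mathrm{Gal}(f/\mathbb{Q})$ is the Galois group of the splitting field of $f$ over $\mathbb{Q}$. *)

(* Defs.v *)
From HB Require Import structures.
From mathcomp Require Import all_boot all_order all_algebra all_fingroup all_solvable all_field.
Set Implicit Arguments. Unset Strict Implicit. Unset Printing Implicit Defensive.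
Import Order.TTheory GRing.Theory Num.Theory.
Local Open Scope ring_scope.

Definition in_Zadjoin (alpha x : algC) : Prop :=
  exists p : {poly int}, x = (map_poly intr p).[alpha].

Definition in_Qadjoin (alpha x : algC) : Prop :=
  exists q : {poly rat}, x = (map_poly ratr q).[alpha].

Definition in_ring_of_integers (alpha x : algC) : Prop :=
  x \in Aint /\ in_Qadjoin alpha x.

Definition monogenic (f : {poly int}) : Prop :=
  exists alpha : algC, root (map_poly intr f) alpha /\
    forall x : algC, in_Zadjoin alpha x <-> in_ring_of_integers alpha x.

(* Main.v *)
Require Import Defs.
From HB Require Import structures.
From mathcomp Require Import all_boot all_order all_algebra all_fingroup all_solvable all_field.
From mathcomp Require Import ring lra zify.
From Stdlib Require Import ClassicalEpsilon.
Set Implicit Arguments. Unset Strict Implicit. Unset Printing Implicit Defensive.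
Import GRing.Theory Num.Theory.
Local Open Scope ring_scope.

Definition pb (P : Prop) : bool := if excluded_middle_informative P then true else false.
Lemma pbP (P : Prop) : reflect P (pb P).
Proof. by rewrite /pb; case: excluded_middle_informative => h; constructor. Qed.

Lemma irr_root_dvd (F : fieldType) (iota : {rmorphism rat -> F}) (f r : {poly rat}) (x : F) :
  irreducible_poly f -> root (map_poly iota f) x -> root (map_poly iota r) x -> (f %| r)%R.
Proof.
move=> [sf irr] rf rr.
have hd : root (map_poly iota (gcdp f r)) x by rewrite gcdp_map root_gcd rf rr.
have sd : size (gcdp f r) != 1%N.
  apply/negP => /eqP s1; move: hd; rewrite /root.
  have ec : gcdp f r = ((gcdp f r)`_0)%:P by apply/size1_polyC; rewrite s1.
  have c0 : (gcdp f r)`_0 != 0.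
    by apply/negP => /eqP c0; move: s1; rewrite ec c0 polyC0 size_poly0.
  by rewrite ec map_polyC hornerC fmorph_eq0 (negbTE c0).
have := irr _ sd (dvdp_gcdl f r) => /eqp_dvdl <-.
exact: dvdp_gcdr.
Qed.
Lemma comp_shift (h k : {poly int}) : exists s, h \Po ('X + k *+ 2) = h + s *+ 2.
Proof.
elim/poly_ind: h => [|h c [s hs]]; first by exists 0; rewrite comp_poly0 mul0rn addr0.
exists (s * 'X + h * k + s * k *+ 2).
rewrite comp_polyD comp_polyM comp_polyX comp_polyC hs.
ring.
Qed.

Lemma coef_XsubC_exp (R : comNzRingType) (c : R) (n : nat) :
  (('X - c%:P) ^+ n)`_n = 1 /\
  (('X - c%:P) ^+ n.+1)`_n = - (c *+ n.+1) /\
  (('X - c%:P) ^+ n.+2)`_n = c ^+ 2 *+ 'C(n.+2, 2).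
Proof.
have hc : forall (u : {poly R}) i, (('X - c%:P) * u)`_i.+1 = u`_i - c * u`_i.+1.
  by move=> u i; rewrite mulrBl coefB coefXM coefCM.
have hD : forall k, (('X - c%:P) ^+ k)`_k.+1 = 0.
  by move=> k; rewrite nth_default // size_exp_XsubC.
elim: n => [|n [IH0 [IH1 IH2]]].
  rewrite expr0 coef1 expr1 coefB coefX coefC /= sub0r; split => //; split => //.
  rewrite expr2 coef0M coefB coefX coefC /= sub0r mulrNN -expr2.
  by rewrite bin2 /= mulr1n.
have A : (('X - c%:P) ^+ n.+1)`_n.+1 = 1 by rewrite exprS hc IH0 hD mulr0 subr0.
have B : (('X - c%:P) ^+ n.+2)`_n.+1 = - (c *+ n.+2).
  by rewrite exprS hc IH1 A mulr1 -opprD -mulrSr.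
split => //; split => //.
rewrite exprS hc IH2 B mulrN opprK.
have e : 'C(n.+3, 2) = ('C(n.+2, 2) + n.+2)%N by rewrite [LHS]binS bin1.
by rewrite e mulrnAr expr2 -mulrnDr.
Qed.

Lemma prod_cong (R : comNzRingType) (phi : {rmorphism {poly int} -> R}) (s : seq R) :
  (forall b, b \in s -> exists k, b = phi ('X + k *+ 2)) ->
  exists Q : {poly {poly int}},
    \prod_(b <- s) ('X - b%:P) = map_poly phi (('X - ('X)%:P) ^+ size s + Q *+ 2).
Proof.
elim: s => [|b s IH] H.
  by exists 0; rewrite big_nil expr0 mul0rn addr0 rmorph1.
have [k ->] := H b (mem_head b s).
rewrite big_cons.
have [Q ->] : exists Q : {poly {poly int}},
    \prod_(b <- s) ('X - b%:P) = map_poly phi (('X - ('X)%:P) ^+ size s + Q *+ 2).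
  by apply: IH => c cs; apply: H; rewrite inE cs orbT.
exists (('X - ('X)%:P) * Q - (k%:P) * (('X - ('X)%:P) ^+ size s) - (k%:P * Q) *+ 2).
rewrite -map_polyXsubC -rmorphM /=; congr (map_poly phi _).
rewrite exprS polyCD polyCMn.
ring.
Qed.

Lemma final_contra (f : {poly int}) (C : nat) (c : int) (Q2 : {poly int}) :
  f \is monic -> (4 <= size f)%N -> odd C ->
  (map_poly intr f : {poly rat}) %| map_poly intr (c%:P - 'X^2 *+ C - Q2 *+ 2) -> False.
Proof.
move=> mf sf oC hd.
have fn0 : f != 0 by rewrite -size_poly_gt0 (leq_trans _ sf).
set R := Pdiv.CommonRing.rmodp Q2 f; set D := Pdiv.CommonRing.rdivp Q2 f.
have eQ : Q2 = D * f + R := Pdiv.RingMonic.rdivp_eq mf Q2.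
have sR : (size R < size f)%N by rewrite Pdiv.CommonRing.ltn_rmodp.
set w := c%:P - 'X^2 *+ C - R *+ 2.
have hw : (map_poly intr f : {poly rat}) %| map_poly intr w.
  have -> : w = (c%:P - 'X^2 *+ C - Q2 *+ 2) + (D * f) *+ 2.
    by rewrite /w eQ mulrnDl; ring.
  rewrite rmorphD; apply: dvdp_add => //.
  by rewrite rmorphMn rmorphM /= -mulrnAl dvdp_mull.
have w0 : w = 0.
  apply/eqP; apply: contraT => wn0.
  have mwn0 : (map_poly intr w : {poly rat}) != 0.
    by rewrite map_poly_eq0_id0 ?lead_coef_eq0 // intr_eq0 lead_coef_eq0.
  have hs := dvdp_leq mwn0 hw.
  rewrite !size_map_poly_id0 ?intr_eq0 ?lead_coef_eq0 ?(monicP mf) ?oner_eq0 // in hs.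
  suff : (size w < size f)%N by rewrite ltnNge hs.
  have [n sfn] : exists n, size f = n.+4.
    by exists (size f - 4)%N; rewrite -addn4 subnK.
  rewrite sfn ltnS; apply/leq_sizeP => j hj.
  have j3 : (3 <= j)%N by rewrite (leq_trans _ hj).
  rewrite /w !coefB !coefMn coefC coefXn.
  rewrite (nth_default 0 (s:=R) (n:=j)); last by rewrite (leq_trans _ hj) // -ltnS -sfn.
  by case: j j3 {hj} => [|[|[|j]]] //=; rewrite mul0rn !subr0.
have := congr1 (fun p : {poly int} => p`_2) w0; rewrite /w /=.
rewrite !coefB !coefMn coefC coefXn /= coef0 sub0r mulr1n.
rewrite natz mulr2n => h.
have hC := odd_double_half C; rewrite oC in hC.
lia.
Qed.
Local Open Scope group_scope.
Lemma dihedral_normal_all (gT : finGroupType) (G N : {group gT}) (m : nat) (x y t : gT) :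
  odd m -> <[x]> <*> <[y]> = G -> x ^+ m = 1 -> y ^+ 2 = 1 -> x ^ y = x^-1 ->
  N \subset G -> t \in N -> t ^+ 2 = 1 -> t != 1 ->
  (forall g n, g \in G -> n \in N -> n ^ g \in N) -> G \subset N.
Proof.
move=> oddm defG xm y2 xy sNG tN t2 nt1 hc.
have nxy : <[y]> \subset 'N(<[x]>) by rewrite norms_cycle xy groupV cycle_id.
have tG : t \in G := subsetP sNG t tN.
have xG : x \in G by rewrite -defG mem_gen // inE cycle_id.
have xpow : forall z : gT, z ^+ m = 1 -> z ^+ 2 = 1 -> z = 1.
  move=> z zm z2; have : z ^+ m.+1 = 1.
    have -> : m.+1 = (2 * (m.+1)./2)%N by rewrite -[in LHS](odd_double_half m.+1) /= oddm mul2n.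
    by rewrite expgM z2 expg1n.
  by rewrite expgS zm mulg1.
have xN_of : x ^+ 2 \in N -> x \in N.
  move=> x2N; have : x ^+ m.+1 \in N.
    have -> : m.+1 = (2 * (m.+1)./2)%N by rewrite -[in LHS](odd_double_half m.+1) /= oddm mul2n.
    by rewrite expgM groupX.
  by rewrite expgS xm mulg1.
move: tG; rewrite -{1}defG norm_joinEr // => /mulsgP[u v /cycleP[i ->] /cycleP[j ->] def_t].
rewrite -(expg_mod j y2) in def_t.
have : (j %% 2 < 2)%N by rewrite ltn_mod.
case: (j %% 2)%N def_t => [|[|//]] def_t _.
- rewrite expg0 mulg1 in def_t; case/eqP: nt1; apply: xpow => //.
  by rewrite def_t -expgM mulnC expgM xm expg1n.
- rewrite expg1 in def_t.
  have xt : x ^ t = x^-1.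
    rewrite def_t conjgM; have -> : x ^ x ^+ i = x by rewrite /conjg (commuteX i (commute_refl x)) mulKg.
    exact: xy.
  have txN : t ^ x \in N by apply: hc.
  have e : t ^ x = t * x ^+ 2.
    rewrite expgS expg1 mulgA.
    have -> : t * x = x^-1 * t.
      have tt : t * t = 1 by rewrite -t2 expgS expg1.
      have tinv : t^-1 = t by rewrite -[t^-1]mulg1 -tt mulKg.
      by rewrite -xt /conjg tinv -!mulgA tt mulg1.
    by rewrite conjgE mulgA.
  have x2N : x ^+ 2 \in N.
    by rewrite -(mulKg t (x ^+ 2)) -e groupM ?groupV.
  have xN := xN_of x2N.
  have yN : y \in N.
    by rewrite -(mulKg (x ^+ i) y) -def_t groupM ?groupV ?groupX.
  by rewrite -defG join_subG !cycle_subG xN yN.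
Qed.
Local Close Scope group_scope.

Unset Implicit Arguments.
Theorem lemma4p2 (m : nat) (Hm3 : (3 <= m)%N) (Hodd : odd m)
    (g : {poly int}) (Hmonic : g \is monic) (Hdeg : size g = m.+1) :
  let f := g \Po 'X^2 in
  ~ [/\ irreducible_poly (map_poly intr f : {poly rat}),
        monogenic f &
        exists (L : splittingFieldType rat) (E : {subfield L}),
          splittingFieldFor 1%VS (map_poly ratr (map_poly intr f : {poly rat})) E /\
          ('Gal(E / 1%VS) \isog 'D_(2 * m))%g ].
Proof.
move=> f [irrf [al [ral mono]] [L [E [splitE isoG]]]].
have sX2 : size ('X^2 : {poly int}) = 3%N by rewrite size_polyXn.
have sf : size f = (2 * m).+1.
  have h := size_comp_poly g ('X^2 : {poly int}); rewrite sX2 Hdeg /= in h.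
  rewrite -[size f]prednK; first by rewrite [_.-1]h mulnC.
  rewrite lt0n size_poly_eq0 comp_poly_eq0 ?sX2 //.
  by rewrite -size_poly_eq0 Hdeg.
have mf : f \is monic.
  apply/monicP; rewrite lead_coef_comp ?sX2 // (monicP Hmonic) lead_coefXn expr1n mulr1 //.
have cf : f`_(2 * m - 2) = g`_(m - 1).
  have -> : (2 * m - 2 = 2 * (m - 1))%N by rewrite mulnBr muln1.
  by rewrite coef_comp_poly_Xn // dvdn_mulr // mulKn.
have fN : f \Po (- 'X) = f.
  rewrite /f -comp_polyA; congr (g \Po _).
  by rewrite !expr2 comp_polyM comp_polyX mulrNN.
set fQ : {poly rat} := map_poly intr f.
have sfQ : size fQ = (2 * m).+1 by rewrite size_map_inj_poly ?sf //; exact: intr_inj.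
have mfQ : fQ \is monic.
  by apply/monicP; rewrite lead_coef_map_inj ?(monicP mf) //; exact: intr_inj.
have epL : map_poly ratr fQ = map_poly (in_alg L) fQ.
  by apply: eq_map_poly => x; rewrite (fmorph_eq_rat (in_alg L)).
rewrite epL in splitE.
set pL := map_poly (in_alg L) fQ in splitE.
have pL1 : pL \is a polyOver 1%VS by apply/polyOver1P; exists fQ.
have ch0 : has_char0 L by move=> p; rewrite pchar_lalg pchar_num.
have galE : galois 1 E.
  apply/and3P; split; first exact: sub1v.
    by apply/separableP => y _; exact: pcharf0_separable.
  by apply/splitting_normalField; [exact: sub1v | exists pL].
have nE : normalField 1 E by case/and3P: galE.
case: (splitE) => rs eqrs defE.
have srs : size rs = (2 * m)%N.
  have := eqp_size eqrs; rewrite size_prod_XsubC size_map_poly sfQ.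
  by case.
case: rs srs eqrs defE => [|a rs'] srs eqrs defE; first by move: srs Hm3 => /= /esym/eqP; rewrite muln_eq0 /= => /eqP ->.
have aE : a \in E by rewrite -defE seqv_sub_adjoin // mem_head.
have ra : root pL a by rewrite (eqp_root eqrs) root_prod_XsubC mem_head.
have mpa : minPoly 1 a = pL.
  have hd1 : minPoly 1 a %| pL := minPoly_dvdp pL1 ra.
  have [mQ emQ] : exists mQ, minPoly 1 a = map_poly (in_alg L) mQ.
    by apply/polyOver1P; exact: minPolyOver.
  have d1 : mQ %| fQ by rewrite -(dvdp_map (in_alg L)) -emQ.
  have d2 : fQ %| mQ by apply: (@irr_root_dvd L (in_alg L) fQ mQ a irrf ra); rewrite -emQ root_minPoly.
  have mmQ : mQ \is monic by rewrite -(map_monic (in_alg L)) -emQ monic_minPoly.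
  have : mQ %= fQ by rewrite /eqp d1 d2.
  by rewrite eqp_monic // emQ => /eqP ->.
have dimE : \dim E = (2 * m)%N.
  have := galois_dim galE; rewrite dimv1 divn1 => ->.
  by rewrite (card_isog isoG) mul2n card_dihedral // (leq_trans _ Hm3).
have EE : (E : {vspace L}) = <<1; a>>%VS.
  apply/eqP; rewrite eq_sym eqEdim; apply/andP; split.
    by apply/FadjoinP; split; [exact: sub1v | exact: aE].
  have := size_minPoly 1 a; rewrite mpa /pL size_map_poly sfQ adjoin_degreeE dimv1 divn1.
  by case=> <-; rewrite dimE.
pose phi : {rmorphism {poly int} -> L} := horner_eval a \o map_poly (intr : int -> L).
have phiE : forall h, phi h = (map_poly intr h).[a] by move=> h; rewrite /= horner_evalE.
have mapc : forall h : {poly int},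
    map_poly (in_alg L) (map_poly (intr : int -> rat) h) = map_poly intr h.
  by move=> h; rewrite -map_poly_comp; apply: eq_map_poly => c; exact: (rmorph_int (in_alg L)).
have mapcC : forall h : {poly int},
    map_poly ratr (map_poly (intr : int -> rat) h) = map_poly (intr : int -> algC) h.
  by move=> h; rewrite -map_poly_comp; apply: eq_map_poly => c /=; rewrite ratr_int.
have ralQ : root (map_poly ratr fQ) al by rewrite /fQ mapcC.
have transfer : forall z, z \in E -> root pL z -> exists w, z = phi w.
  move=> z; rewrite EE => /Fadjoin_polyP [q q1 ->] rz.
  have [qQ eq] : exists qQ, q = map_poly (in_alg L) qQ by apply/polyOver1P.
  rewrite eq in rz *.
  have d1 : fQ %| fQ \Po qQ.
    apply: (@irr_root_dvd L (in_alg L) fQ _ a irrf ra).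
    by rewrite map_comp_poly /root horner_comp.
  set z' := (map_poly ratr qQ).[al].
  have rz' : root (map_poly (intr : int -> algC) f) z'.
    have [w ew] := dvdpP _ _ d1.
    have := congr1 (fun p => (map_poly ratr p).[al]) ew.
    rewrite /= map_comp_poly horner_comp rmorphM /= hornerM (rootP ralQ) mulr0.
    by rewrite /root -mapcC => ->.
  have mfC : map_poly (intr : int -> algC) f \is monic.
    by apply/monicP; rewrite lead_coef_map_inj ?(monicP mf) //; exact: intr_inj.
  have z'A : z' \in Aint.
    apply: (root_monic_Aint rz' mfC); apply/polyOverP => i; rewrite coef_map /=; exact: intr_int.
  have [h eh] : in_Zadjoin al z'.
    by apply/(mono z'); split; [exact: z'A | exists qQ].
  exists h.
  have d2 : fQ %| qQ - map_poly intr h.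
    apply: (@irr_root_dvd algC ratr fQ _ al irrf ralQ).
    by rewrite rmorphB /= /root hornerD hornerN -/z' mapcC eh subrr.
  have [w2 ew2] := dvdpP _ _ d2.
  have := congr1 (fun p => (map_poly (in_alg L) p).[a]) ew2.
  rewrite /= rmorphB rmorphM /= hornerD hornerN hornerM (rootP ra) mulr0.
  by move/eqP; rewrite subr_eq0 mapc => /eqP ->; rewrite horner_evalE.
have galphi : forall (tau : gal_of E) h w, tau a = phi w -> tau (phi h) = phi (h \Po w).
  move=> tau h w ew.
  have mt : map_poly tau (map_poly intr h) = map_poly intr h.
    by rewrite -map_poly_comp; apply: eq_map_poly => c; exact: rmorph_int.
  rewrite phiE -horner_map /= ew mt (phiE w) horner_evalE -horner_comp.
  by rewrite -map_comp_poly.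
have pLN : pL \Po (- 'X) = pL.
  by rewrite /pL /fQ -[in RHS]fN !map_comp_poly !rmorphN /= !map_polyX.
have raN : root pL (- a).
  have : (pL \Po (- 'X)).[a] = 0 by rewrite pLN (rootP ra).
  by rewrite horner_comp hornerN hornerX => /eqP.
have [sig sigG sa] : exists2 sig, sig \in 'Gal(E / 1%VS)%g & sig a = - a.
  by apply: normalField_root_minPoly => //; [exact: sub1v | rewrite mpa].
have two0 : (2%:R : L) != 0.
  by rewrite -(rmorph_nat (in_alg L)) fmorph_eq0.
have a0 : a != 0.
  apply/negP => /eqP a0.
  have : fQ %| 'X.
    apply: (@irr_root_dvd L (in_alg L) fQ 'X a irrf ra).
    by rewrite map_polyX /root hornerX a0.
  move/(dvdp_leq (negbT (polyX_eq0 _))); rewrite size_polyX sfQ => h.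
  by clear -h Hm3; lia.
have galpoly : forall tau : gal_of E, tau \in 'Gal(E / 1%VS)%g ->
    forall q x, q \is a polyOver 1%VS -> tau q.[x] = q.[tau x].
  by move=> tau tauG q x q1; rewrite -horner_map /= (fixedPoly_gal (sub1v E) tauG q1).
have sig1 : sig != 1%g.
  apply/negP => /eqP s1; move: sa; rewrite s1 gal_id => /eqP.
  rewrite -subr_eq0 opprK -mulr2n -mulr_natl mulf_eq0 (negbTE two0) /=.
  by rewrite (negbTE a0).
have sig2 : (sig ^+ 2)%g = 1%g.
  apply/eqP/gal_eqP => z zE; have : z \in <<1; a>>%VS by rewrite -EE.
  move=> /Fadjoin_polyP [q q1 ez].
  rewrite expgS expg1 galM // ez gal_id (galpoly sig sigG q a q1) (galpoly sig sigG q _ q1) sa.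
  by rewrite linearN /= sa opprK.
pose G := 'Gal(E / 1%VS)%G.
pose P (tau : gal_of E) := exists k : {poly int}, tau a = phi ('X + k *+ 2).
have phiX : phi 'X = a by rewrite phiE map_polyX hornerX.
pose Nset := [set tau in G | pb (P tau)].
have gsN : group_set Nset.
  apply/group_setP; split.
    rewrite inE group1 /=; apply/pbP; exists 0.
    by rewrite mul0rn addr0 phiX gal_id.
  move=> t1 t2; rewrite !inE => /andP[t1G /pbP[k1 e1]] /andP[t2G /pbP[k2 e2]].
  rewrite groupM //=; apply/pbP.
  exists (k2 + (k1 \Po ('X + k2 *+ 2))).
  rewrite galM // e1 (galphi t2 _ _ e2); congr (phi _).
  rewrite comp_polyD comp_polyX raddfMn /=; ring.
pose N := Group gsN.
have sNG : N \subset G by apply/subsetP => t; rewrite inE => /andP[].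
have rootG : forall tau : gal_of E, tau \in G -> root pL (tau a).
  by move=> tau tauG; rewrite -mpa root_minPoly_gal //; exact: sub1v.
have hc : forall rho n, rho \in G -> n \in N -> (n ^ rho)%g \in N.
  move=> rho n rhoG; rewrite !inE => /andP[nG /pbP[k ek]].
  rewrite groupJ //=; apply/pbP.
  have giG : (rho^-1)%g \in G by rewrite groupV.
  have [w1 ew1] := transfer _ (memv_gal _ aE) (rootG _ giG).
  have [w2 ew2] := transfer _ (memv_gal _ aE) (rootG _ rhoG).
  have [s es] := comp_shift w1 k.
  exists (s \Po w2).
  rewrite conjgE !galM ?memv_gal // ew1 (galphi n _ _ ek) es (galphi rho _ _ ew2).
  rewrite comp_polyD raddfMn !rmorphD phiX.
  congr (_ + _); rewrite -(galphi rho _ _ ew2) -ew1 -galM ?memv_gal //.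
  by rewrite mulVg gal_id.
have sigN : sig \in N.
  rewrite inE sigG /=; apply/pbP; exists (- 'X).
  by rewrite rmorphD rmorphMn rmorphN phiX sa; ring.
have m1 : (1 < m)%N by rewrite (leq_trans _ Hm3).
have isoG' : ('Gal(E / 1%VS) \isog [set: 'D_(m.*2)])%g by rewrite -mul2n.
have iso2 := isoGrp_trans isoG' (Grp_dihedral m1).
have := isoGrp_hom iso2 => /existsP [[x y]] /=.
rewrite !xpair_eqE => /and4P [/eqP defG /eqP xm /eqP y2 /eqP xy].
have GN : G \subset N.
  apply: (@dihedral_normal_all _ G N m x y sig Hodd) => //.
have allG : forall tau, tau \in G -> P tau.
  move=> tau tauG; have := subsetP GN tau tauG; rewrite inE => /andP[_ /pbP]; exact.
have /(galois_factors (sub1v E)) hf := galE.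
have [r [rG _ mp]] := hf a aE.
rewrite mpa in mp.
have [rs2 mp2 hrs] : exists2 rs2 : seq L, pL = \prod_(b <- rs2) ('X - b%:P) &
    forall b, b \in rs2 -> exists k, b = phi ('X + k *+ 2).
  exists (map (fun tau : gal_of E => tau a) r) => // b /mapP [tau taur ->].
  exact: allG (subsetP rG tau taur).
clear mp; rename mp2 into mp.
have [Q eQ] := prod_cong hrs.
have srs2 : size rs2 = (2 * m)%N.
  by have := congr1 (fun p : {poly L} => size p) mp; rewrite /= size_prod_XsubC /pL size_map_poly sfQ; case.
rewrite srs2 in eQ.
have e2m : (2 * m = (2 * m - 2).+2)%N by clear -Hm3; lia.
have hV := (coef_XsubC_exp ('X : {poly int}) (2 * m - 2)).2.2.
rewrite -e2m in hV.
set k := (2 * m - 2)%N in hV.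
set C := 'C(2 * m, 2) in hV.
set c := f`_k.
have hc2 := congr1 (fun p : {poly L} => p`_k) (etrans mp eQ).
have L1 : pL`_k = phi (c%:P).
  rewrite (phiE c%:P) /pL /fQ !coef_map /= map_polyC hornerC /=; exact: (rmorph_int (in_alg L) c).
rewrite /= L1 coef_map /= coefD hV coefMn in hc2.
change (phi c%:P = phi ('X^2 *+ C + Q`_k *+ 2)) in hc2.
set Q2 := Q`_k in hc2.
have w0 : phi (c%:P - 'X^2 *+ C - Q2 *+ 2) = 0.
  by rewrite !rmorphB hc2 rmorphD; ring.
have hd : fQ %| map_poly intr (c%:P - 'X^2 *+ C - Q2 *+ 2).
  apply: (@irr_root_dvd L (in_alg L) fQ _ a irrf ra).
  by rewrite mapc /root -phiE w0.
have oC : odd C.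
  rewrite /C bin2.
  have -> : (2 * m * (2 * m).-1 = (m * (2 * m).-1).*2)%N by rewrite -mul2n mulnA.
  rewrite doubleK oddM Hodd /=.
  have -> : (2 * m).-1 = (2 * (m - 1)).+1 by clear -Hm3; lia.
  by rewrite /= oddM.
apply: (final_contra mf _ oC hd).
by rewrite sf; clear -Hm3; lia.
Qed.
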